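(* In the standing setting, let $(A,B,R,\sigma)$ be a normalized context. If $(\chi_X,\chi_Y)\in\mathcal{FC}$ with $\varnothing\ne X\subsetneq B$ and $\varnothing\ne Y\subsetneq A$, then $(\chi_{B\setminus X},\chi_{A\setminus Y})\in\mathcal{FC}$.
   Context: Adjoint triple: for posets $(P_1,\le_1),(P_2,\le_2),(P_3,\le_3)$, maps $\&\colon P_1\times P_2\to P_3$, $\swarrow\colon P_3\times P_2\to P_1$, $\nwarrow\colon P_3\times P_1\to P_2$ with $x\le_1 z\swarrow y \iff x\,\&\,y\le_3 z \iff y\le_2 z\nwarrow x$ for all $x,y,z$. For lower-bounded posets, $\&$ has zero-divisors if there are $x\ne\bot_1$, $y\neq\bot_2$ with $x\,\&\,y=\bot_3$. Standing setting: $(L_1,\preceq_1,\bot_1,\top_1)$ and $(L_2,\preceq_2,\bot_2,\top_2)$ are complete lattices and $(P,\le,\bot,\top)$ is a bounded poset. A multi-adjoint frame consists of adjoint triples $(\&_i,\swarrow^i,\nwarrow_i)$, $i=1,\dots,n$, with respect to $L_1,L_2,P$; a property-oriented frame consists of adjoint triples $(\&^p_j,\swarrow_p^j,\nwarrow^p_j)$, $j=1,\dots,m$, with respect to $P,L_2,L_1$; an object-oriented frame consists of adjoint triples $(\&^o_k,\swarrow_o^k,\nwarrow^o_k)$, $k=1,\dots,s$, with respect to $L_1,P,L_2$. All conjunctors $\&_i,\&^p_j,\&^o_k$ have no zero-divisors. A context $(A,B,R,\sigma)$ consists of non-empty sets $A,B$, $R\colon A\times B\to P$, and maps $\sigma,\sigma_p,\sigma_o$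 from $A\times B$ to the index sets of the three frames. It is normalized if every $a\in A$ has $b_1,b_2\in B$ with $R(a,b_1)\ne\bot$, $R(a,b_2)=\bot$, and every $b\in B$ has $a_1,a_2\in A$ with $R(a_1,b)\neq\bot$, $R(a_2,b)=\bot$. Fuzzy necessity operators: $g^{\uparrow_N}(a)=\inf\{g(b)\swarrow_o^{\sigma_o(a,b)}R(a,b)\mid b\in B\}$ for $g\in L_2^B$, and $f^{\downarrow^N}(b)=\inf\{f(a)\nwarrow^p_{\sigma_p(a,b)}R(a,b)\mid a\in A\}$ for $f\in L_1^A$. $\mathcal F_N=\{(g,f)\mid g\in L_2^B,\ f\in L_1^A,\ g^{\uparrow_N}=f,\ f^{\downarrow^N}=g\}$. For $X\subseteq B$, $\chi_X\in L_2^B$ takes value $\top_2$ on $X$ and $\bot_2$ elsewhere; for $Y\subseteq A$, $\chi_Y\in L_1^A$ takes value $\top_1$ on $Y$ and $\bot_1$ elsewhere. $\mathcal{FC}=\{(\chi_X,\chi_Y)\in\mathcal F_N\mid \varnothing\ne X\subsetneq B,\ \varnothing\neq Y\subsetneq A\}$. *)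

(* Defs.v *)
From mathcomp Require Import all_boot.
Set Implicit Arguments.
Unset Strict Implicit.
Unset Printing Implicit Defensive.

Record CLattice := {
  cl_car :> Type;
  cl_le : cl_car -> cl_car -> Prop;
  cl_refl : forall x, cl_le x x;
  cl_antisym : forall x y, cl_le x y -> cl_le y x -> x = y;
  cl_trans : forall x y z, cl_le x y -> cl_le y z -> cl_le x z;
  cl_inf : (cl_car -> Prop) -> cl_car;
  cl_inf_lb : forall (S : cl_car -> Prop) x, S x -> cl_le (cl_inf S) x;
  cl_inf_glb : forall (S : cl_car -> Prop) y,
      (forall x, S x -> cl_le y x) -> cl_le y (cl_inf S)
}.

Definition cl_bot (L : CLattice) : L := cl_inf (fun _ => True).
Definition cl_top (L : CLattice) : L := cl_inf (fun _ => False).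

Record BPoset := {
  bp_car :> Type;
  bp_le : bp_car -> bp_car -> Prop;
  bp_refl : forall x, bp_le x x;
  bp_antisym : forall x y, bp_le x y -> bp_le y x -> x = y;
  bp_trans : forall x y z, bp_le x y -> bp_le y z -> bp_le x z;
  bp_bot : bp_car;
  bp_top : bp_car;
  bp_bot_le : forall x, bp_le bp_bot x;
  bp_le_top : forall x, bp_le x bp_top
}.

Definition adjoint_triple {T1 T2 T3 : Type}
  (le1 : T1 -> T1 -> Prop) (le2 : T2 -> T2 -> Prop) (le3 : T3 -> T3 -> Prop)
  (conj : T1 -> T2 -> T3) (sw : T3 -> T2 -> T1) (nw : T3 -> T1 -> T2) : Prop :=
  forall x y z, (le1 x (sw z y) <-> le3 (conj x y) z) /\
                (le3 (conj x y) z <-> le2 y (nw z x)).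

Definition no_zero_divisors {T1 T2 T3 : Type} (b1 : T1) (b2 : T2) (b3 : T3)
  (conj : T1 -> T2 -> T3) : Prop :=
  ~ (exists x y, x <> b1 /\ y <> b2 /\ conj x y = b3).

Record Setting := {
  L1 : CLattice;
  L2 : CLattice;
  P : BPoset;
  nn : nat;
  ma_conj : 'I_nn -> L1 -> L2 -> P;
  ma_sw : 'I_nn -> P -> L2 -> L1;
  ma_nw : 'I_nn -> P -> L1 -> L2;
  ma_adj : forall i, adjoint_triple (@cl_le L1) (@cl_le L2) (@bp_le P)
                       (ma_conj i) (ma_sw i) (ma_nw i);
  ma_nzd : forall i, no_zero_divisors (cl_bot L1) (cl_bot L2) (bp_bot P) (ma_conj i);
  mm : nat;
  p_conj : 'I_mm -> P -> L2 -> L1;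
  p_sw : 'I_mm -> L1 -> L2 -> P;
  p_nw : 'I_mm -> L1 -> P -> L2;
  p_adj : forall j, adjoint_triple (@bp_le P) (@cl_le L2) (@cl_le L1)
                      (p_conj j) (p_sw j) (p_nw j);
  p_nzd : forall j, no_zero_divisors (bp_bot P) (cl_bot L2) (cl_bot L1) (p_conj j);
  ss : nat;
  o_conj : 'I_ss -> L1 -> P -> L2;
  o_sw : 'I_ss -> L2 -> P -> L1;
  o_nw : 'I_ss -> L2 -> L1 -> P;
  o_adj : forall k, adjoint_triple (@cl_le L1) (@bp_le P) (@cl_le L2)
                      (o_conj k) (o_sw k) (o_nw k);
  o_nzd : forall k, no_zero_divisors (cl_bot L1) (bp_bot P) (cl_bot L2) (o_conj k)
}.

Record Context (S : Setting) := {
  cA : Type;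
  cB : Type;
  cA_ne : inhabited cA;
  cB_ne : inhabited cB;
  cR : cA -> cB -> P S;
  csigma : cA -> cB -> 'I_(nn S);
  csigma_p : cA -> cB -> 'I_(mm S);
  csigma_o : cA -> cB -> 'I_(ss S)
}.

Definition normalized (S : Setting) (K : Context S) : Prop :=
  (forall a : cA K, (exists b1, cR a b1 <> bp_bot (P S)) /\
                    (exists b2, cR a b2 = bp_bot (P S))) /\
  (forall b : cB K, (exists a1, cR a1 b <> bp_bot (P S)) /\
                    (exists a2, cR a2 b = bp_bot (P S))).

Definition up_N (S : Setting) (K : Context S) (g : cB K -> L2 S) : cA K -> L1 S :=
  fun a => cl_inf (fun x => exists b, x = o_sw (csigma_o a b) (g b) (cR a b)).

Definition down_N (S : Setting) (K : Context S) (f : cA K -> L1 S) : cB K -> L2 S :=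
  fun b => cl_inf (fun y => exists a, y = p_nw (csigma_p a b) (f a) (cR a b)).

Definition in_FN (S : Setting) (K : Context S)
  (g : cB K -> L2 S) (f : cA K -> L1 S) : Prop :=
  up_N g = f /\ down_N f = g.

Definition chiB (S : Setting) (K : Context S) (X : pred (cB K)) : cB K -> L2 S :=
  fun b => if X b then cl_top (L2 S) else cl_bot (L2 S).
Definition chiA (S : Setting) (K : Context S) (Y : pred (cA K)) : cA K -> L1 S :=
  fun a => if Y a then cl_top (L1 S) else cl_bot (L1 S).

Definition nonempty_proper {T : Type} (X : pred T) : Prop :=
  (exists t, X t) /\ (exists t, ~~ X t).

Definition in_FC (S : Setting) (K : Context S) (X : pred (cB K)) (Y : pred (cA K)) : Prop :=
  in_FN (chiB X) (chiA Y) /\ nonempty_proper X /\ nonempty_proper Y.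

(* Main.v *)
From Stdlib Require Import Classical FunctionalExtensionality.
Require Import Defs.
From mathcomp Require Import all_boot.
Set Implicit Arguments.
Unset Strict Implicit.

Lemma bot_le (L : CLattice) (x : L) : cl_le (cl_bot L) x.
Proof. by apply: cl_inf_lb. Qed.
Lemma le_top (L : CLattice) (x : L) : cl_le x (cl_top L).
Proof. by apply: cl_inf_glb => ? []. Qed.
Lemma le_bot_eq (L : CLattice) (x : L) : cl_le x (cl_bot L) -> x = cl_bot L.
Proof. move=> h; apply: cl_antisym => //; exact: bot_le. Qed.
Lemma triv_all (L : CLattice) : cl_top L = cl_bot L -> forall x : L, x = cl_bot L.
Proof. move=> e x; apply: le_bot_eq; rewrite -e; exact: le_top. Qed.
Lemma inf_top (L : CLattice) (Sx : L -> Prop) :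
  (forall x, Sx x -> x = cl_top L) -> cl_inf Sx = cl_top L.
Proof.
move=> h; apply: cl_antisym; first exact: le_top.
apply: cl_inf_glb => x /h ->; exact: cl_refl.
Qed.
Lemma inf_bot (L : CLattice) (Sx : L -> Prop) : Sx (cl_bot L) -> cl_inf Sx = cl_bot L.
Proof. move=> h; apply: le_bot_eq; exact: cl_inf_lb. Qed.

Lemma osw_top (S : Setting) k r : o_sw k (cl_top (L2 S)) r = cl_top (L1 S).
Proof.
apply: cl_antisym; first exact: le_top.
apply (proj2 (proj1 (o_adj k _ _ _))); exact: le_top.
Qed.
Lemma osw_botbot (S : Setting) k : o_sw k (cl_bot (L2 S)) (bp_bot (P S)) = cl_top (L1 S).
Proof.
apply: cl_antisym; first exact: le_top.
apply (proj2 (proj1 (o_adj k _ _ _))); apply (proj2 (proj2 (o_adj k _ _ _))).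
exact: bp_bot_le.
Qed.
Lemma osw_bot (S : Setting) k r : r <> bp_bot (P S) -> o_sw k (cl_bot (L2 S)) r = cl_bot (L1 S).
Proof.
move=> hr; set x := o_sw k _ r.
have h : cl_le (o_conj k x r) (cl_bot _).
  by apply (proj1 (proj1 (o_adj k _ _ _))); apply: cl_refl.
have e := le_bot_eq h.
apply: NNPP => nx; case: (@o_nzd S k); by exists x, r.
Qed.

Lemma pnw_top (S : Setting) j r : p_nw j (cl_top (L1 S)) r = cl_top (L2 S).
Proof.
apply: cl_antisym; first exact: le_top.
apply (proj1 (proj2 (p_adj j _ _ _))); exact: le_top.
Qed.
Lemma pnw_botbot (S : Setting) j : p_nw j (cl_bot (L1 S)) (bp_bot (P S)) = cl_top (L2 S).
Proof.
apply: cl_antisym; first exact: le_top.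
apply (proj1 (proj2 (p_adj j _ _ _))); apply (proj1 (proj1 (p_adj j _ _ _))).
exact: bp_bot_le.
Qed.
Lemma pnw_bot (S : Setting) j r : r <> bp_bot (P S) -> p_nw j (cl_bot (L1 S)) r = cl_bot (L2 S).
Proof.
move=> hr; set y := p_nw j _ r.
have h : cl_le (p_conj j r y) (cl_bot _).
  by apply (proj2 (proj2 (p_adj j _ _ _))); apply: cl_refl.
have e := le_bot_eq h.
apply: NNPP => ny; case: (@p_nzd S j); by exists r, y.
Qed.

Lemma up_top (S : Setting) (K : Context S) (X : pred (cB K)) a :
  (forall b, X b \/ cR a b = bp_bot (P S)) -> up_N (chiB X) a = cl_top _.
Proof.
move=> H; apply: inf_top => x [b ->]; rewrite /chiB.
case: (H b) => [Xb | Rb]; first by rewrite Xb osw_top.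
rewrite Rb; case: (X b); [exact: osw_top | exact: osw_botbot].
Qed.
Lemma up_bot (S : Setting) (K : Context S) (X : pred (cB K)) a :
  (exists b, ~~ X b /\ cR a b <> bp_bot (P S)) -> up_N (chiB X) a = cl_bot _.
Proof.
move=> [b [nX hR]]; apply: inf_bot; exists b.
by rewrite /chiB (negbTE nX) osw_bot.
Qed.
Lemma down_top (S : Setting) (K : Context S) (Y : pred (cA K)) b :
  (forall a, Y a \/ cR a b = bp_bot (P S)) -> down_N (chiA Y) b = cl_top _.
Proof.
move=> H; apply: inf_top => x [a ->]; rewrite /chiA.
case: (H a) => [Ya | Rb]; first by rewrite Ya pnw_top.
rewrite Rb; case: (Y a); [exact: pnw_top | exact: pnw_botbot].
Qed.
Lemma down_bot (S : Setting) (K : Context S) (Y : pred (cA K)) b :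
  (exists a, ~~ Y a /\ cR a b <> bp_bot (P S)) -> down_N (chiA Y) b = cl_bot _.
Proof.
move=> [a [nY hR]]; apply: inf_bot; exists a.
by rewrite /chiA (negbTE nY) pnw_bot.
Qed.

Theorem mainTheorem7 (S : Setting) (K : Context S)
  (X : pred (cB K)) (Y : pred (cA K)) :
  normalized K ->
  in_FC X Y ->
  in_FC (fun b => ~~ X b) (fun a => ~~ Y a).
Proof.
move=> [hA hB] [[hup hdown] [[[xb Xxb] [nxb nXnxb]] [[ya Yya] [nya nYnya]]]].
split; last first.
  split; split.
  - by exists nxb.
  - by exists xb; rewrite negbK.
  - by exists nya.
  - by exists ya; rewrite negbK.
have [a0] := cA_ne K.
have [[b0 hb0] _] := hA a0.
have t12 : cl_top (L1 S) = cl_bot (L1 S) -> cl_top (L2 S) = cl_bot (L2 S).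
  move=> t1; apply: NNPP => n2; case: (@p_nzd S (csigma_p a0 b0)).
  exists (cR a0 b0), (cl_top (L2 S)); split => //; split => //; exact: triv_all.
have t21 : cl_top (L2 S) = cl_bot (L2 S) -> cl_top (L1 S) = cl_bot (L1 S).
  move=> t2; apply: NNPP => n1; case: (@o_nzd S (csigma_o a0 b0)).
  exists (cl_top (L1 S)), (cR a0 b0); split => //; split => //; exact: triv_all.
case: (classic (cl_top (L1 S) = cl_bot (L1 S))) => t1.
  have t2 := t12 t1.
  split; apply: functional_extensionality => x.
    by rewrite (triv_all t1 (up_N _ x)) (triv_all t1 (chiA _ x)).
  by rewrite (triv_all t2 (down_N _ x)) (triv_all t2 (chiB _ x)).
have t2 : cl_top (L2 S) <> cl_bot (L2 S) by move=> /t21.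
have fY : forall a b, Y a -> cR a b <> bp_bot (P S) -> X b.
  move=> a b Ya hR; apply: NNPP => nX.
  have := @up_bot S K X a (ex_intro _ b (conj (introN idP nX) hR)).
  by rewrite hup /chiA Ya.
have fX : forall a b, X b -> cR a b <> bp_bot (P S) -> Y a.
  move=> a b Xb hR; apply: NNPP => nY.
  have := @down_bot S K Y b (ex_intro _ a (conj (introN idP nY) hR)).
  by rewrite hdown /chiB Xb.
split; apply: functional_extensionality.
  move=> a; rewrite /chiA; case Ya: (Y a) => /=.
    have [[b1 hb1] _] := hA a.
    apply: up_bot; exists b1; rewrite negbK; split => //; exact: fY Ya hb1.
  apply: up_top => b; case: (classic (cR a b = bp_bot (P S))) => h; [by right|left].
  apply/negP => Xb; have := fX a b Xb h; by rewrite Ya.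
move=> b; rewrite /chiB; case Xb: (X b) => /=.
  have [[a1 ha1] _] := hB b.
  apply: down_bot; exists a1; rewrite negbK; split => //; exact: fX Xb ha1.
apply: down_top => a; case: (classic (cR a b = bp_bot (P S))) => h; [by right|left].
apply/negP => Ya; have := fY a b Ya h; by rewrite Xb.
Qed.
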